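(* Let $(A,B)$ be a definite pencil. If $0<\epsilon<\gamma(A,B)$, then $$\Lambda^{\mathrm{sym}}_\epsilon(A,B)=\left\{z\in\mathbb{C}:\ \sigma_{\min}(A-zB)\le\epsilon\sqrt{1+|z|^2}\right\}\cap\mathbb{R}.$$
   Context: A pencil $(A,B)$ of $n\times n$ complex matrices is definite if $A,B$ are Hermitian and $\gamma(A,B)=\min_{\|x\|_2=1}|x^H(A+iB)x|>0$. For $\epsilon>0$, the symmetric $\epsilon$-pseudospectrum is $\Lambda^{\mathrm{sym}}_\epsilon(A,B)=\{z\in\mathbb{C}:(A+E)u=z(B+F)u$ for some $u\ne0$ and Hermitian $E,F$ with $\sqrt{\|E\|_2^2+\|F\|_2^2}\le\epsilon\}$. $\sigma_{\min}$ denotes the smallest singular value. *)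

(* Defs.v *)
From HB Require Import structures.
From mathcomp Require Import all_boot all_order all_algebra.
From mathcomp Require Import complex.
From mathcomp Require Import boolp classical_sets reals.
Set Implicit Arguments. Unset Strict Implicit. Unset Printing Implicit Defensive.
Import Order.TTheory GRing.Theory Num.Theory.
Local Open Scope ring_scope.
Local Open Scope classical_set_scope.

Section Defs.
Variable R : realType.
Local Notation C := (R[i]).
Definition cabs (z : C) : R := ComplexField.Normc.normc z.

Definition ctrmx (m n : nat) (M : 'M[C]_(m, n)) : 'M[C]_(n, m) :=
  map_mx Num.conj (M^T).

Definition hermitian (n : nat) (M : 'M[C]_n) : Prop := ctrmx M = M.

Definition vnorm2 (n : nat) (x : 'cV[C]_n) : R :=
  Num.sqrt (\sum_(i < n) cabs (x i 0) ^+ 2).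

Definition unit_sphere (n : nat) : set 'cV[C]_n := [set x | vnorm2 x = 1].

Definition opnorm2 (n : nat) (M : 'M[C]_n) : R :=
  sup [set vnorm2 (M *m x) | x in @unit_sphere n].

Definition sigma_min (n : nat) (M : 'M[C]_n) : R :=
  inf [set vnorm2 (M *m x) | x in @unit_sphere n].

Definition crawford (n : nat) (A B : 'M[C]_n) : R :=
  inf [set cabs ((ctrmx x *m (A + 'i%C *: B) *m x) 0 0) | x in @unit_sphere n].

Definition definite_pencil (n : nat) (A B : 'M[C]_n) : Prop :=
  [/\ hermitian A, hermitian B & 0 < crawford A B].

Definition sym_pseudospectrum (n : nat) (eps : R) (A B : 'M[C]_n) : set C :=
  [set z | exists (u : 'cV[C]_n) (E F : 'M[C]_n),
     [/\ u != 0, hermitian E, hermitian F,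
         Num.sqrt (opnorm2 E ^+ 2 + opnorm2 F ^+ 2) <= eps &
         (A + E) *m u = z *: ((B + F) *m u)]].

End Defs.

(* Main.v *)
Require Import Defs.
From HB Require Import structures.
From mathcomp Require Import all_boot all_order all_algebra.
From mathcomp Require Import complex.
From mathcomp Require Import boolp classical_sets reals.
From mathcomp Require Import ring lra.
Import Order.TTheory GRing.Theory Num.Theory.
Local Open Scope ring_scope.
Local Open Scope classical_set_scope.
Set Implicit Arguments. Unset Strict Implicit. Unset Printing Implicit Defensive.

Section Aux.
Variable R : realType.
Local Notation C := R[i].
Local Notation RC x := ((x%:C)%C : C).

Lemma cabsE (z : C) : RC (cabs z) = `|z|.
Proof. by []. Qed.

Lemma conjE (z : C) : Num.conj z = (z^*)%C.
Proof. by []. Qed.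

Lemma cabs_ge0 (z : C) : 0 <= cabs z.
Proof. by rewrite /cabs; case: z => a b; exact: sqrtr_ge0. Qed.

Lemma cabsRC (r : R) : cabs (RC r) = `|r|.
Proof. by rewrite /cabs /= expr0n addr0 sqrtr_sqr. Qed.

Lemma cabsM (a b : C) : cabs (a * b) = cabs a * cabs b.
Proof. exact: ComplexField.Normc.normcM. Qed.

Lemma conjRC (r : R) : Num.conj (RC r) = RC r.
Proof. by rewrite conjE conjc_real. Qed.

Lemma real_conj (w : C) : Num.conj w = w -> w = RC (complex.Re w).
Proof.
case: w => a b; rewrite conjE /= => -[] H.
by apply/eqP; rewrite eq_complex /= eqxx /=; apply/eqP; lra.
Qed.

Lemma RCI (a b : R) : RC a = RC b -> a = b.
Proof. by case. Qed.

Lemma ctrmxK m k (M : 'M[C]_(m, k)) : ctrmx (ctrmx M) = M.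
Proof. by apply/matrixP => i j; rewrite !mxE conjCK. Qed.

Lemma ctrmxD m k (M N : 'M[C]_(m, k)) : ctrmx (M + N) = ctrmx M + ctrmx N.
Proof. by apply/matrixP => i j; rewrite !mxE rmorphD. Qed.

Lemma ctrmxN m k (M : 'M[C]_(m, k)) : ctrmx (- M) = - ctrmx M.
Proof. by apply/matrixP => i j; rewrite !mxE rmorphN. Qed.

Lemma ctrmxZ m k c (M : 'M[C]_(m, k)) : ctrmx (c *: M) = Num.conj c *: ctrmx M.
Proof. by apply/matrixP => i j; rewrite !mxE rmorphM. Qed.

Lemma ctrmxM m k l (M : 'M[C]_(m, k)) (N : 'M[C]_(k, l)) :
  ctrmx (M *m N) = ctrmx N *m ctrmx M.
Proof. by rewrite /ctrmx trmx_mul map_mxM. Qed.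

Lemma ctrmx1 m : ctrmx (1%:M : 'M[C]_m) = 1%:M.
Proof. by rewrite /ctrmx trmx1 map_mx1. Qed.

Definition ip m (x y : 'cV[C]_m) : C := (ctrmx x *m y) 0 0.

Lemma ipE m (x y : 'cV[C]_m) : ip x y = \sum_k Num.conj (x k 0) * y k 0.
Proof. by rewrite /ip mxE; apply: eq_bigr => k _; rewrite !mxE. Qed.

Lemma ip_dot m (x y : 'cV[C]_m) : ip x y = dotmx y^T x^T.
Proof. by rewrite ipE dotmxE mxE; apply: eq_bigr => k _; rewrite !mxE mulrC. Qed.

Lemma ipZr m c (x y : 'cV[C]_m) : ip x (c *: y) = c * ip x y.
Proof. by rewrite /ip -scalemxAr mxE. Qed.

Lemma ipDr m (x y z : 'cV[C]_m) : ip x (y + z) = ip x y + ip x z.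
Proof. by rewrite /ip mulmxDr mxE. Qed.

Lemma ip_conj m (x y : 'cV[C]_m) : Num.conj (ip x y) = ip y x.
Proof.
rewrite /ip.
have -> : Num.conj ((ctrmx x *m y) 0 0) = (ctrmx (ctrmx x *m y)) 0 0 by rewrite !mxE.
by rewrite ctrmxM ctrmxK.
Qed.

Lemma ip_herm m (x : 'cV[C]_m) (M : 'M[C]_m) : Defs.hermitian M -> Num.conj (ip x (M *m x)) = ip x (M *m x).
Proof.
by move=> hM; rewrite ip_conj /ip ctrmxM hM mulmxA.
Qed.

Lemma vnorm2_ge0 m (x : 'cV[C]_m) : 0 <= vnorm2 x.
Proof. exact: sqrtr_ge0. Qed.

Lemma vnorm2_sq m (x : 'cV[C]_m) : vnorm2 x ^+ 2 = \sum_k cabs (x k 0) ^+ 2.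
Proof. by rewrite sqr_sqrtr // sumr_ge0 // => k _; rewrite exprn_ge0 // cabs_ge0. Qed.

Lemma vnorm2_ip m (x : 'cV[C]_m) : RC (vnorm2 x ^+ 2) = ip x x.
Proof.
rewrite vnorm2_sq rmorph_sum ipE; apply: eq_bigr => k _.
by rewrite -normCKC -cabsE rmorphXn.
Qed.

Lemma vnorm2C m (x : 'cV[C]_m) : RC (vnorm2 x) = sqrtC (ip x x).
Proof.
by rewrite -vnorm2_ip rmorphXn sqrCK // ler0c vnorm2_ge0.
Qed.

Lemma vnorm2_0 m : vnorm2 (0 : 'cV[C]_m) = 0.
Proof. by rewrite /vnorm2 big1 ?sqrtr0 // => k _; rewrite mxE /cabs ComplexField.Normc.normc0 expr0n. Qed.

Lemma vnorm2_eq0 m (x : 'cV[C]_m) : vnorm2 x = 0 -> x = 0.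
Proof.
move=> h; have : ip x x = 0 by rewrite -vnorm2_ip h expr0n.
rewrite ip_dot => /eqP; rewrite dnorm_eq0 => /eqP h2.
by rewrite -[x]trmxK h2 trmx0.
Qed.

Lemma vnorm2Z m c (x : 'cV[C]_m) : vnorm2 (c *: x) = cabs c * vnorm2 x.
Proof.
rewrite /vnorm2.
have -> : \sum_k cabs ((c *: x) k 0) ^+ 2 = cabs c ^+ 2 * \sum_k cabs (x k 0) ^+ 2.
  by rewrite mulr_sumr; apply: eq_bigr => k _; rewrite mxE cabsM exprMn.
by rewrite sqrtrM ?exprn_ge0 ?cabs_ge0 // sqrtr_sqr ger0_norm // cabs_ge0.
Qed.

Lemma vnorm2N m (x : 'cV[C]_m) : vnorm2 (- x) = vnorm2 x.
Proof. by rewrite -scaleN1r vnorm2Z -(rmorphN1 (real_complex R)) cabsRC normrN1 mul1r. Qed.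

Lemma vnorm2D m (x y : 'cV[C]_m) : vnorm2 (x + y) <= vnorm2 x + vnorm2 y.
Proof.
rewrite -lecR rmorphD /= !vnorm2C !ip_dot linearD /=.
exact: (triangle_lerif (@dotmx C m) _ _).1.
Qed.

Lemma cs m (x y : 'cV[C]_m) : cabs (ip x y) <= vnorm2 x * vnorm2 y.
Proof.
rewrite -lecR rmorphM /= !vnorm2C cabsE !ip_dot mulrC.
exact: (CauchySchwarz_sqrt (@dotmx C m) _ _).1.
Qed.


Lemma mulmx_ip m (M : 'M[C]_m) x i : (M *m x) i 0 = ip (ctrmx (row i M)) x.
Proof. by rewrite /ip ctrmxK -row_mul [in RHS]mxE. Qed.

Lemma vnorm2_bound m (M : 'M[C]_m) :
  exists K, forall x, vnorm2 (M *m x) <= K * vnorm2 x.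
Proof.
exists (Num.sqrt (\sum_i vnorm2 (ctrmx (row i M)) ^+ 2)) => x.
apply: (@le_trans _ _ (Num.sqrt (\sum_i vnorm2 (ctrmx (row i M)) ^+ 2 * vnorm2 x ^+ 2))).
  apply: ler_wsqrtr; apply: ler_sum => i _.
  rewrite mulmx_ip -exprMn !expr2.
  have h := cs (ctrmx (row i M)) x.
  by apply: ler_pM => //; apply: cabs_ge0.
rewrite -mulr_suml sqrtrM ?sumr_ge0 // ?sqrtr_sqr ?ger0_norm ?vnorm2_ge0 //.
by move=> i _; apply: exprn_ge0; apply: vnorm2_ge0.
Qed.

Lemma unit_vnorm2 m (x : 'cV[C]_m) : x != 0 ->
  vnorm2 ((RC (vnorm2 x)^-1) *: x) = 1.
Proof.
move=> hx; have hN : vnorm2 x != 0 by apply/eqP => /vnorm2_eq0 /eqP; rewrite (negbTE hx).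
rewrite vnorm2Z cabsRC ger0_norm ?invr_ge0 ?vnorm2_ge0 // mulVf //.
Qed.

Lemma opnorm_ub m (M : 'M[C]_m) x : vnorm2 (M *m x) <= opnorm2 M * vnorm2 x.
Proof.
have [->|hx] := eqVneq x 0; first by rewrite mulmx0 vnorm2_0 mulr0.
have hN : 0 < vnorm2 x.
  rewrite lt_def vnorm2_ge0 andbT; apply/eqP => /vnorm2_eq0 /eqP; by rewrite (negbTE hx).
set c := (vnorm2 x)^-1.
have hu := unit_vnorm2 hx.
have [K hK] := vnorm2_bound M.
have : vnorm2 (M *m (RC c *: x)) <= opnorm2 M.
  apply: sup_upper_bound; last by exists (RC c *: x).
  split; first by exists (vnorm2 (M *m (RC c *: x))); exists (RC c *: x).
  exists K => _ [y hy <-]; have := hK y; rewrite hy mulr1 //.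
rewrite -scalemxAr vnorm2Z cabsRC ger0_norm ?invr_ge0 ?vnorm2_ge0 //.
by rewrite -(ler_pM2r hN) mulrAC mulVf ?mul1r // gt_eqF.
Qed.

Lemma sigma_lb m (M : 'M[C]_m) x : vnorm2 x = 1 -> sigma_min M <= vnorm2 (M *m x).
Proof.
move=> hx; apply: ge_inf; last by exists x.
by exists 0 => _ [y _ <-]; apply: vnorm2_ge0.
Qed.

Lemma crawford_lb m (A B : 'M[C]_m) x : vnorm2 x = 1 ->
  crawford A B <= cabs ((ctrmx x *m (A + 'i%C *: B) *m x) 0 0).
Proof.
move=> hx; apply: ge_inf; last by exists x.
by exists 0 => _ [y _ <-]; apply: cabs_ge0.
Qed.


Lemma hermE m (M : 'M[C]_m) : Defs.hermitian M <-> M \is hermsymmx.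
Proof.
rewrite /Defs.hermitian /ctrmx; split => [H|/is_hermitianmxP].
  by apply/is_hermitianmxP; rewrite expr0 scale1r H.
by rewrite expr0 scale1r => <-.
Qed.

Lemma vnorm2_unitary m (Q : 'M[C]_m) y : ctrmx Q *m Q = 1%:M ->
  vnorm2 (Q *m y) = vnorm2 y.
Proof.
move=> hQ; apply: RCI; rewrite !vnorm2C /ip ctrmxM.
by rewrite mulmxA -(mulmxA (ctrmx y)) hQ mulmx1.
Qed.

Lemma vnorm2_delta m (i0 : 'I_m) : vnorm2 (delta_mx i0 (0 : 'I_1) : 'cV[C]_m) = 1.
Proof.
rewrite /vnorm2 (bigD1 i0) //= big1 => [|k hk].
  by rewrite !mxE !eqxx /= expr1n expr0n /= ?mulr0n ?addr0 ?sqrtr1 ?expr1n ?addr0 ?sqrtr1.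
by rewrite !mxE (negbTE hk) /= expr0n /= ?mulr0n ?addr0 ?sqrtr0 ?expr0n.
Qed.

Lemma herm_eig m (M : 'M[C]_m.+1) : Defs.hermitian M ->
  exists u l, [/\ vnorm2 u = 1, M *m u = RC l *: u &
     forall x, vnorm2 x = 1 -> `|l| <= vnorm2 (M *m x)].
Proof.
move=> /hermE hM.
have /orthomx_spectralP hM' := hermitian_normalmx hM.
have dreal := hermitian_spectral_diag_real hM.
move: hM' dreal.
set P := spectralmx M; set d := spectral_diag M => hM' dreal.
have Pu : P \is unitarymx := spectral_unitarymx M.
have PP : P *m ctrmx P = 1%:M by apply/unitarymxP.
have iP : invmx P = ctrmx P := invmx_unitary Pu.
have PP' : ctrmx P *m P = 1%:M by rewrite -iP mulVmx // unitarymx_unit.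
rewrite iP in hM'.
have hdr : forall j, Num.conj (d 0 j) = d 0 j.
  by move=> j; apply/CrealP; move/mxOverP: dreal; apply.
case: (@arg_minP _ _ _ ord0 xpredT (fun j => cabs (d 0 j)) isT) => i0 _ Hmin.
set l := complex.Re (d 0 i0).
have dl : d 0 i0 = RC l by apply: real_conj; apply: hdr.
exists (ctrmx P *m delta_mx i0 0), l; split.
- by rewrite vnorm2_unitary ?ctrmxK // vnorm2_delta.
- rewrite {1}hM' -!mulmxA (mulmxA P) PP mul1mx -dl scalemxAr; congr (_ *m _).
  apply/matrixP => j k; rewrite mul_diag_mx !mxE.
  by case: (eqVneq j i0) => [->|hj]; rewrite ?eqxx ?mulr0 ?mulr1n ?mulr0n //= mulr1n.
- move=> x hx; rewrite hM' -!mulmxA vnorm2_unitary ?ctrmxK //.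
  set y := P *m x.
  have hy : vnorm2 y = 1 by rewrite /y vnorm2_unitary.
  clearbody y.
  have h2 : `|l| ^+ 2 <= vnorm2 (diag_mx d *m y) ^+ 2.
    rewrite vnorm2_sq.
    have -> : `|l| ^+ 2 = `|l| ^+ 2 * vnorm2 y ^+ 2 by rewrite hy expr1n mulr1.
    rewrite vnorm2_sq mulr_sumr; apply: ler_sum => j _.
    rewrite mul_diag_mx mxE cabsM exprMn; apply: ler_wpM2r; first by apply: exprn_ge0; apply: cabs_ge0.
    rewrite -cabsRC -dl; apply: (@lerXn2r _ 2); rewrite ?nnegrE ?cabs_ge0 //.
    exact: Hmin.
  have := vnorm2_ge0 (diag_mx d *m y); have := normr_ge0 l. nra.
Qed.


Lemma cabsN (w : C) : cabs (- w) = cabs w.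
Proof. by rewrite -mulN1r cabsM -(rmorphN1 (real_complex R)) cabsRC normrN1 mul1r. Qed.

Lemma cabs_ri (e f : R) : cabs (RC e + 'i%C * RC f) = Num.sqrt (e ^+ 2 + f ^+ 2).
Proof.
have -> : RC e + 'i%C * RC f = (e +i* f)%C.
  by apply/eqP; rewrite eq_complex /= !mul0r !mul1r subrr !add0r addr0 !eqxx.
by [].
Qed.

Lemma opnorm_scal m c (u : 'cV[C]_m) : vnorm2 u = 1 ->
  opnorm2 (RC c *: (1%:M : 'M[C]_m)) = `|c|.
Proof.
move=> hu; rewrite /opnorm2.
have -> : [set vnorm2 ((RC c *: (1%:M : 'M[C]_m)) *m x) | x in @unit_sphere R m] = [set `|c|].
  apply/seteqP; split => y.
    by move=> [x hx <-]; rewrite -scalemxAl mul1mx vnorm2Z cabsRC hx mulr1.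
  by move=> ->; exists u => //; rewrite -scalemxAl mul1mx vnorm2Z cabsRC hu mulr1.
by rewrite sup1.
Qed.

End Aux.

Section Aux2.
Variable R : realType.
Local Notation C := R[i].

Lemma opnorm_ub1 m (M : 'M[C]_m) x : vnorm2 x = 1 -> vnorm2 (M *m x) <= opnorm2 M.
Proof. by move=> hx; have := opnorm_ub M x; rewrite hx mulr1. Qed.

Lemma quad_ub m (M : 'M[C]_m) x : vnorm2 x = 1 -> cabs (ip x (M *m x)) <= opnorm2 M.
Proof.
move=> hx; apply: (le_trans (cs _ _)); rewrite hx mul1r; exact: opnorm_ub1.
Qed.

Lemma crawford_contra (e f oE oF eps c : R) : `|e| <= oE -> `|f| <= oF ->
  Num.sqrt (oE ^+ 2 + oF ^+ 2) <= eps -> eps < c -> c <= Num.sqrt (e ^+ 2 + f ^+ 2) -> False.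
Proof.
move=> hE hF hn he hc.
have he2 : e ^+ 2 <= oE ^+ 2.
  rewrite -(real_normK (num_real e)); apply: (@lerXn2r _ 2); rewrite ?nnegrE //.
  exact: le_trans (normr_ge0 _) hE.
have hf2 : f ^+ 2 <= oF ^+ 2.
  rewrite -(real_normK (num_real f)); apply: (@lerXn2r _ 2); rewrite ?nnegrE //.
  exact: le_trans (normr_ge0 _) hF.
have h : Num.sqrt (e ^+ 2 + f ^+ 2) <= Num.sqrt (oE ^+ 2 + oF ^+ 2).
  by apply: ler_wsqrtr; apply: lerD.
have := lt_le_trans he (le_trans hc (le_trans h hn)).
by rewrite ltxx.
Qed.

Lemma final_ineq (t oE oF nE nF eps : R) : 0 <= t -> 0 <= nF -> nF <= oF ->
  0 <= nE -> nE <= oE -> Num.sqrt (oE ^+ 2 + oF ^+ 2) <= eps ->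
  t * nF + nE <= eps * Num.sqrt (1 + t ^+ 2).
Proof.
move=> ht hNF hFx hNE hEx hn.
have hoE : 0 <= oE := le_trans hNE hEx.
have hoF : 0 <= oF := le_trans hNF hFx.
have hw : Num.sqrt (oE ^+ 2 + oF ^+ 2) ^+ 2 = oE ^+ 2 + oF ^+ 2.
  by rewrite sqr_sqrtr // addr_ge0 // exprn_ge0.
have hw0 := sqrtr_ge0 (oE ^+ 2 + oF ^+ 2).
move: hn hw hw0; set w := Num.sqrt _ => hn hw hw0.
have hs : Num.sqrt (1 + t ^+ 2) ^+ 2 = 1 + t ^+ 2.
  by rewrite sqr_sqrtr // addr_ge0 // exprn_ge0.
have hs0 := sqrtr_ge0 (1 + t ^+ 2).
move: hs hs0; set s := Num.sqrt (1 + t ^+ 2) => hs hs0.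
have step1 : t * nF + nE <= t * oF + oE.
  by apply: lerD => //; apply: (ler_wpM2l ht hFx).
have step2 : (t * oF + oE) ^+ 2 <= (s * w) ^+ 2.
  rewrite exprMn hs hw.
  have -> : (1 + t ^+ 2) * (oE ^+ 2 + oF ^+ 2) =
    (t * oF + oE) ^+ 2 + (t * oE - oF) ^+ 2 by ring.
  by rewrite lerDl sqr_ge0.
have step3 : t * oF + oE <= s * w.
  have h0 : 0 <= t * oF + oE by apply: addr_ge0 => //; apply: mulr_ge0.
  have h0' : 0 <= s * w by apply: mulr_ge0.
  by rewrite -(@ler_pXn2r _ 2) ?nnegrE.
apply: (le_trans step1); apply: (le_trans step3).
by rewrite mulrC; apply: (ler_wpM2r hs0 hn).
Qed.

Lemma rev_ineq (l r eps sig : R) : 0 < eps -> `|l| <= sig ->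
  sig <= eps * Num.sqrt (1 + `|r| ^+ 2) ->
  Num.sqrt (`|- l / (1 + r ^+ 2)| ^+ 2 + `|r * l / (1 + r ^+ 2)| ^+ 2) <= eps.
Proof.
move=> heps hls hsig.
rewrite real_normK ?num_real // in hsig.
have ht : 0 < 1 + r ^+ 2 by have := sqr_ge0 r; lra.
rewrite !real_normK ?num_real //.
move: hsig ht; set t := 1 + r ^+ 2 => hsig ht.
have hl2 : l ^+ 2 <= eps ^+ 2 * t.
  have h := le_trans hls hsig.
  have hst : Num.sqrt t ^+ 2 = t by rewrite sqr_sqrtr // ltW.
  rewrite -hst -exprMn -(real_normK (num_real l)).
  apply: (@lerXn2r _ 2); rewrite ?nnegrE //.
  by apply: mulr_ge0; [apply: ltW | apply: sqrtr_ge0].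
have -> : (- l / t) ^+ 2 + (r * l / t) ^+ 2 = l ^+ 2 / t.
  by rewrite /t; field; rewrite -/t; apply: lt0r_neq0.
rewrite -(ger0_norm (ltW heps)) -sqrtr_sqr; apply: ler_wsqrtr.
by rewrite ler_pdivrMr.
Qed.

Lemma rev_id (l r : R) : l + - l / (1 + r ^+ 2) = r * (r * l / (1 + r ^+ 2)).
Proof.
have ht : 0 < 1 + r ^+ 2 by have := sqr_ge0 r; lra.
by field; apply: lt0r_neq0.
Qed.

End Aux2.

Theorem lemma2p5 (R : realType) (n : nat) (A B : 'M[R[i]]_n) (eps : R) :
  definite_pencil A B ->
  0 < eps -> eps < crawford A B ->
  sym_pseudospectrum eps A B =
  [set z : R[i] | sigma_min (A - z *: B) <= eps * Num.sqrt (1 + cabs z ^+ 2)]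
  `&` [set z : R[i] | complex.Im z = 0].
Proof.
move=> [hA hB hg] heps hepsg.
case: n A B hA hB hg hepsg => [|m] A B hA hB hg hepsg.
  exfalso.
  have E0 : [set cabs ((ctrmx x *m (A + 'i%C *: B) *m x) 0 0) | x in @unit_sphere R 0] = set0.
    apply/seteqP; split => // y [x hx _]; move: hx; rewrite /unit_sphere /= /vnorm2 big_ord0 sqrtr0.
    by move=> /esym/eqP; rewrite oner_eq0.
  by move: hg; rewrite /crawford E0 inf0 ltxx.
apply/seteqP; split => z.
- move=> [u [E [F [hu hE hF hn heq]]]].
  have hx : vnorm2 (((vnorm2 u)^-1%:C)%C *: u) = 1 := unit_vnorm2 hu.
  have heqx : (A + E) *m (((vnorm2 u)^-1%:C)%C *: u) = z *: ((B + F) *m (((vnorm2 u)^-1%:C)%C *: u)).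
    by rewrite -!scalemxAr heq !scalerA mulrC.
  move: hx heqx; set x := _ *: u => hx heqx; clearbody x.
  have hAE : Defs.hermitian (A + E) by rewrite /Defs.hermitian ctrmxD hA hE.
  have hBF : Defs.hermitian (B + F) by rewrite /Defs.hermitian ctrmxD hB hF.
  have hab : ip x ((A + E) *m x) = z * ip x ((B + F) *m x) by rewrite heqx ipZr.
  have ha := ip_herm x hAE; have hb := ip_herm x hBF.
  have hgE := ip_herm x hE; have hgF := ip_herm x hF.
  have hE1 := quad_ub E hx; have hF1 := quad_ub F hx.
  have eA : ip x ((A + E) *m x) = ip x (A *m x) + ip x (E *m x) by rewrite mulmxDl ipDr.
  have eB : ip x ((B + F) *m x) = ip x (B *m x) + ip x (F *m x) by rewrite mulmxDl ipDr.
  have e1 : (ctrmx x *m (A + 'i%C *: B) *m x) 0 0 = ip x (A *m x) + 'i%C * ip x (B *m x).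
    by rewrite -mulmxA -/(ip x _) mulmxDl ipDr -scalemxAl ipZr.
  have hc := crawford_lb A B hx.
  rewrite e1 in hc.
  move: hab ha hb eA eB hgE hgF hE1 hF1 hc.
  set a := ip x ((A + E) *m x); set b := ip x ((B + F) *m x).
  set gA := ip x (A *m x); set gB := ip x (B *m x).
  set gE := ip x (E *m x); set gF := ip x (F *m x).
  move=> hab ha hb eA eB hgE hgF hE1 hF1 hc.
  have hb0 : b != 0.
    apply/negP => /eqP hb0.
    have ha0 : a = 0 by rewrite hab hb0 mulr0.
    have e2 : gA = - gE by move: ha0; rewrite eA => /eqP; rewrite addr_eq0 => /eqP.
    have e3 : gB = - gF by move: hb0; rewrite eB => /eqP; rewrite addr_eq0 => /eqP.
    rewrite e2 e3 mulrN -opprD cabsN (real_conj hgE) (real_conj hgF) cabs_ri in hc.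
    rewrite (real_conj hgE) cabsRC in hE1; rewrite (real_conj hgF) cabsRC in hF1.
    exact: crawford_contra hE1 hF1 hn hepsg hc.
  have hz : z = a / b by rewrite hab mulfK.
  split; last first.
    have ha' : a = ((complex.Re a)%:C)%C := real_conj ha.
    have hb' : b = ((complex.Re b)%:C)%C := real_conj hb.
    by rewrite hz ha' hb' -fmorph_div.
  have h1 : (A - z *: B) *m x = z *: (F *m x) - E *m x.
    have heqx' := heqx; rewrite !mulmxDl scalerDr in heqx'.
    rewrite mulmxBl -scalemxAl.
    apply/eqP; rewrite -subr_eq0; apply/eqP.
    transitivity ((A *m x + E *m x) - (z *: (B *m x) + z *: (F *m x))); last by rewrite heqx' subrr.
    by rewrite opprB addrACA -opprD.
  apply: (le_trans (sigma_lb _ hx)); rewrite h1.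
  apply: (le_trans (vnorm2D _ _)); rewrite vnorm2N vnorm2Z.
  apply: final_ineq.
  + exact: cabs_ge0.
  + exact: vnorm2_ge0.
  + exact: opnorm_ub1.
  + exact: vnorm2_ge0.
  + exact: opnorm_ub1.
  + exact: hn.
- move=> [/= hsig hIm].
  case: z hsig hIm => r s hsig hs; simpl in hs; subst s.
  have hM : Defs.hermitian (A - ((r +i* 0)%C) *: B).
    have hc : Num.conj ((r +i* 0)%C) = ((r +i* 0)%C) := conjRC r.
    by rewrite /Defs.hermitian ctrmxD ctrmxN ctrmxZ hA hB hc.
  have [u [l [hu hMu hl]]] := herm_eig hM.
  have hls : `|l| <= sigma_min (A - ((r +i* 0)%C) *: B).
    apply: lb_le_inf; first by exists (vnorm2 ((A - ((r +i* 0)%C) *: B) *m u)); exists u.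
    by move=> _ [y hy <-]; apply: hl.
  have hcr : cabs ((r +i* 0)%C) = `|r| := cabsRC r.
  rewrite [cabs _]hcr in hsig.
  exists u, (((- l / (1 + r ^+ 2))%:C)%C *: 1%:M), (((r * l / (1 + r ^+ 2))%:C)%C *: 1%:M); split.
  + apply/eqP => hu0; move: hu; rewrite hu0 vnorm2_0 => /esym/eqP; by rewrite oner_eq0.
  + by rewrite /Defs.hermitian ctrmxZ ctrmx1 conjRC.
  + by rewrite /Defs.hermitian ctrmxZ ctrmx1 conjRC.
  + rewrite !(opnorm_scal _ hu).
    exact: rev_ineq heps hls hsig.
  + rewrite !mulmxDl -!scalemxAl !mul1mx.
    have hAu : A *m u = ((r +i* 0)%C) *: (B *m u) + ((l%:C)%C) *: u.
      by rewrite -hMu mulmxBl -scalemxAl [RHS]addrC subrK.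
    rewrite hAu scalerDr scalerA -addrA; congr (_ + _).
    rewrite -scalerDl; congr (_ *: _).
    rewrite -[((r +i* 0)%C)]/((r%:C)%C : R[i]).
    rewrite -rmorphD -rmorphM; congr (_%:C)%C.
    exact: rev_id.
Qed.
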